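(* Let $A=\{a_n\}_{n\in\mathbb Z}\subset\mathbb R$ be an almost periodic set. Then there is a number $d>0$ such that for every $\eta>0$ there exists $N_\eta$ with the property that for every half-interval $I=[x,x+l)$ of length $l=l(I)>N_\eta$, $$\left|\frac{\#(A\cap I)}{l(I)}-d\right|<\eta.$$
   Context: A discrete locally finite multiset $A=\{a_n\}_{n\in\mathbb Z}\subset\mathbb R$ (a point may occur several times in the sequence) is called almost periodic if for every $\varepsilon>0$ the set of $\varepsilon$-almost periods $$E_\varepsilon=\{\tau\in\mathbb R:\ \exists\text{ a bijection }\sigma:\mathbb Z\to\mathbb Z\text{ with }\sup_n|a_n+\tau-a_{\sigma(n)}|<\varepsilon\}$$ is relatively dense, i.e. there is $L_\varepsilon>0$ such that $E_\varepsilon\cap(x,x+L_\varepsilon)\neq\emptyset$ for every $x\in\mathbb R$. $\#(A\cap H)$ denotes the number of indices $n$ with $a_n\in H$ (multiplicities counted). *)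

(* Defs.v *)
From Stdlib Require Import Reals ZArith List.
Open Scope R_scope.

(* A multiset A = {a_n}_{n in Z} is given as a sequence a : Z -> R. *)

Definition locally_finite (a : Z -> R) : Prop :=
  forall x y : R, exists l : list Z, forall n : Z, x <= a n <= y -> In n l.

Definition bijZ (s : Z -> Z) : Prop :=
  exists g : Z -> Z, (forall n, g (s n) = n) /\ (forall m, s (g m) = m).

Definition almost_period (a : Z -> R) (eps tau : R) : Prop :=
  exists sigma : Z -> Z, bijZ sigma /\
    exists delta : R, delta < eps /\
      forall n : Z, Rabs (a n + tau - a (sigma n)) <= delta.

Definition relatively_dense (E : R -> Prop) : Prop :=
  exists L : R, 0 < L /\ forall x : R, exists tau, x < tau < x + L /\ E tau.

Definition almost_periodic (a : Z -> R) : Prop :=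
  locally_finite a /\
  forall eps : R, 0 < eps -> relatively_dense (almost_period a eps).

(* count a x y k :  #(A ∩ [x, y)) = k, multiplicities counted, i.e. the number
   of indices n with x <= a n < y equals k. *)
Definition count_in (a : Z -> R) (x y : R) (k : nat) : Prop :=
  exists l : list Z, NoDup l /\ length l = k /\
    (forall n : Z, In n l <-> x <= a n < y).

(* Main.v *)
Require Import Defs.
From Stdlib Require Import Reals ZArith List Lra Lia Classical.
Open Scope R_scope.

Lemma count_exists (a : Z -> R) (hlf : locally_finite a) x y :
  exists k, count_in a x y k.
Proof.
  destruct (hlf x y) as [l Hl].
  pose (f := fun n => if Rle_dec x (a n) then if Rlt_dec (a n) y then true else false else false).
  exists (length (nodup Z.eq_dec (filter f l))).
  exists (nodup Z.eq_dec (filter f l)). split; [apply NoDup_nodup|split;[reflexivity|]].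
  intro n. rewrite nodup_In, filter_In. unfold f.
  destruct (Rle_dec x (a n)); destruct (Rlt_dec (a n) y); split; intros H;
    try (destruct H; discriminate); try lra.
  split; auto. apply Hl. lra.
Qed.

Lemma count_le_list (a : Z -> R) (s : Z -> Z) x y k (l' : list Z) :
  (forall n m, s n = s m -> n = m) ->
  count_in a x y k -> (forall n, x <= a n < y -> In (s n) l') -> (k <= length l')%nat.
Proof.
  intros Hinj [l [Hnd [Hlen Hin]]] Hmap. subst k.
  rewrite <- (length_map s l). apply NoDup_incl_length.
  - apply NoDup_map_NoDup_ForallPairs; auto.
    intros u v _ _. apply Hinj.
  - intros m Hm. apply in_map_iff in Hm. destruct Hm as [n [<- Hn]].
    apply Hmap, Hin, Hn.
Qed.

Lemma count_mono (a : Z -> R) x y x' y' k k' :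
  count_in a x y k -> count_in a x' y' k' -> x' <= x -> y <= y' -> (k <= k')%nat.
Proof.
  intros Hc [l' [_ [Hl' Hin']]] h1 h2. subst k'.
  apply (count_le_list a (fun n => n) x y k l'); auto.
  intros n Hn. apply Hin'. lra.
Qed.

Lemma count_split_ge (a : Z -> R) x y z k k1 k2 :
  x <= y -> y <= z ->
  count_in a x z k -> count_in a x y k1 -> count_in a y z k2 -> (k1 + k2 <= k)%nat.
Proof.
  intros h1 h2 [l [Hnd [Hl Hin]]] [l1 [Hnd1 [Hl1 Hin1]]] [l2 [Hnd2 [Hl2 Hin2]]].
  subst. rewrite <- length_app. apply NoDup_incl_length.
  - apply NoDup_app; auto. intros n H1 H2. apply Hin1 in H1. apply Hin2 in H2. lra.
  - intros n Hn. apply in_app_or in Hn. apply Hin. destruct Hn as [H|H];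
      [apply Hin1 in H|apply Hin2 in H]; lra.
Qed.

Lemma count_split_le (a : Z -> R) x y z k k1 k2 :
  count_in a x z k -> count_in a x y k1 -> count_in a y z k2 -> (k <= k1 + k2)%nat.
Proof.
  intros Hc [l1 [Hnd1 [Hl1 Hin1]]] [l2 [Hnd2 [Hl2 Hin2]]].
  subst. rewrite <- length_app.
  apply (count_le_list a (fun n => n) x z k); auto.
  intros n Hn. apply in_or_app. destruct (Rlt_dec (a n) y).
  - left. apply Hin1. lra. - right. apply Hin2. lra.
Qed.

Lemma Rabs_le_inv x d : Rabs x <= d -> -d <= x <= d.
Proof. intros H. unfold Rabs in H. destruct (Rcase_abs x); lra. Qed.

Lemma bij_inj s : bijZ s -> forall n m, s n = s m -> n = m.
Proof. intros [g [H1 H2]] n m E. rewrite <- (H1 n), <- (H1 m), E. reflexivity. Qed.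

Lemma U_bound (a : Z -> R) (hA : almost_periodic a) h : 0 <= h ->
  exists K : nat, forall z k, count_in a z (z + h) k -> (k <= K)%nat.
Proof.
  intros hh. destruct hA as [hlf hap].
  destruct (hap 1 ltac:(lra)) as [L [HL Hd]].
  destruct (count_exists a hlf (-1) (L + h + 1)) as [K HK].
  exists K. intros z k Hk.
  destruct (Hd (-z)) as [t [Ht [s [Hs [del [Hdel Hb]]]]]].
  destruct HK as [l' [_ [Hl' Hin']]]. subst K.
  apply (count_le_list a s z (z+h) k l' (bij_inj s Hs) Hk).
  intros n Hn. apply Hin'. specialize (Hb n). apply Rabs_le_inv in Hb. lra.
Qed.

Lemma C_bound (a : Z -> R) (hlf : locally_finite a) L
  (Hd : forall x, exists t, x < t < x + L /\ almost_period a 1 t)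
  K1 K3 (HK1 : forall z k, count_in a z (z + (L+1)) k -> (k <= K1)%nat)
  (HK3 : forall z k, count_in a z (z + 1) k -> (k <= K3)%nat) :
  forall x y l k k', 0 <= l -> count_in a x (x + l) k -> count_in a y (y + l) k' ->
  (k <= k' + K1 + K3)%nat.
Proof.
  intros x y l k k' hl Hk Hk'.
  destruct (Hd (y - x - L)) as [t [Ht [s [Hs [del [Hdel Hb]]]]]].
  destruct (count_exists a hlf (y - L - 1) y) as [k1 Hk1].
  destruct (count_exists a hlf (y + l) (y + l + 1)) as [k3 Hk3].
  assert (k1 <= K1)%nat.
  { apply (HK1 (y - L - 1)). replace (y - L - 1 + (L + 1)) with y by ring. exact Hk1. }
  assert (k3 <= K3)%nat by (apply (HK3 (y + l)); exact Hk3).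
  destruct Hk1 as [l1 [_ [Hl1 Hin1]]]. destruct Hk3 as [l3 [_ [Hl3 Hin3]]].
  destruct Hk' as [l2 [_ [Hl2 Hin2]]]. subst.
  assert (length l2 + length l1 + length l3 >= k)%nat; [|lia].
  rewrite <- !length_app.
  apply (count_le_list a s x (x+l) k _ (bij_inj s Hs) Hk).
  intros n Hn. specialize (Hb n). apply Rabs_le_inv in Hb.
  apply in_or_app. destruct (Rlt_dec (a (s n)) (y + l)).
  - left. apply in_or_app. destruct (Rlt_dec (a (s n)) y).
    + right. apply Hin1. lra.
    + left. apply Hin2. lra.
  - right. apply Hin3. lra.
Qed.

Lemma lin_bound (a : Z -> R) (hlf : locally_finite a) K3
  (HK3 : forall z k, count_in a z (z + 1) k -> (k <= K3)%nat) :
  forall x l k, 0 <= l -> count_in a x (x + l) k -> INR k <= INR K3 * (l + 1).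
Proof.
  assert (forall j : nat, forall x l k, 0 <= l < INR j -> count_in a x (x + l) k ->
            INR k <= INR K3 * (l + 1)).
  { induction j as [|j IH]; intros x l k Hl Hk.
    - simpl in Hl. lra.
    - assert (0 <= INR K3) by apply pos_INR.
      destruct (Rlt_dec l 1).
      + destruct (count_exists a hlf x (x + 1)) as [k' Hk'].
        assert (k <= k')%nat by (apply (count_mono a _ _ _ _ _ _ Hk Hk'); lra).
        apply le_INR in H0. apply HK3 in Hk'. apply le_INR in Hk'. nra.
      + destruct (count_exists a hlf x (x + 1)) as [k1 Hk1].
        destruct (count_exists a hlf (x + 1) (x + 1 + (l - 1))) as [k2 Hk2].
        assert (k <= k1 + k2)%nat.
        { apply (count_split_le a x (x+1) (x+l)); auto.
          replace (x + l) with (x + 1 + (l - 1)) by ring. auto. }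
        apply le_INR in H0. rewrite plus_INR in H0.
        apply HK3 in Hk1. apply le_INR in Hk1.
        rewrite S_INR in Hl.
        assert (INR k2 <= INR K3 * (l - 1 + 1)) by (apply (IH (x+1)); auto; lra).
        nra. }
  intros x l k hl Hk. destruct (INR_unbounded l) as [j Hj]. apply (H j x); auto; lra.
Qed.

Lemma block_bound (a : Z -> R) (hlf : locally_finite a) r l0 :
  0 <= r -> 0 < l0 ->
  (forall x k, count_in a x (x + l0) k -> r * l0 <= INR k) ->
  forall x l k, 0 <= l -> count_in a x (x + l) k -> r * (l - l0) <= INR k.
Proof.
  intros hr hl0 Hb.
  assert (forall j : nat, forall x l k, 0 <= l < INR j * l0 -> count_in a x (x + l) k ->
            r * (l - l0) <= INR k).
  { induction j as [|j IH]; intros x l k Hl Hk.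
    - simpl in Hl. lra.
    - assert (0 <= INR k) by apply pos_INR.
      destruct (Rlt_dec l l0).
      + nra.
      + destruct (count_exists a hlf x (x + l0)) as [k1 Hk1].
        destruct (count_exists a hlf (x + l0) (x + l0 + (l - l0))) as [k2 Hk2].
        assert (k1 + k2 <= k)%nat.
        { apply (count_split_ge a x (x+l0) (x+l)); try lra; auto.
          replace (x + l) with (x + l0 + (l - l0)) by ring. auto. }
        apply le_INR in H0. rewrite plus_INR in H0.
        apply Hb in Hk1.
        rewrite S_INR in Hl.
        assert (r * (l - l0 - l0) <= INR k2) by (apply (IH (x+l0)); auto; nra).
        nra. }
  intros x l k hl Hk. destruct (INR_unbounded (l / l0)) as [j Hj].
  apply (H j x); auto. split; auto.
  apply Rmult_lt_reg_r with (/ l0). apply Rinv_0_lt_compat; auto.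
  rewrite Rmult_assoc, Rinv_r by lra. unfold Rdiv in Hj. lra.
Qed.

Theorem proposition3 (a : Z -> R) (hA : almost_periodic a) :
  exists d : R, 0 < d /\
    forall eta : R, 0 < eta ->
      exists N : R, forall (x l : R), N < l ->
        forall k : nat, count_in a x (x + l) k ->
          Rabs (INR k / l - d) < eta.
Proof.
  pose proof hA as [hlf hap].
  destruct (hap 1 ltac:(lra)) as [L [HL Hd]].
  destruct (U_bound a hA (L+1) ltac:(lra)) as [K1 HK1].
  destruct (U_bound a hA 1 ltac:(lra)) as [K3 HK3].
  pose proof (C_bound a hlf L Hd K1 K3 HK1 HK3) as HC.
  pose proof (lin_bound a hlf K3 HK3) as Hlin.
  assert (Hpos : forall x k, count_in a x (x + (L+2)) k -> (1 <= k)%nat).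
  { intros x k [l [_ [Hl Hin]]].
    destruct (Hd (x + 1 - a 0%Z)) as [t [Ht [s [Hs [del [Hdel Hb]]]]]].
    specialize (Hb 0%Z). apply Rabs_le_inv in Hb.
    assert (In (s 0%Z) l) by (apply Hin; lra).
    destruct l; [destruct H|]. subst; simpl; lia. }
  set (E := fun r => exists l0, 1 <= l0 /\
              forall x k, count_in a x (x + l0) k -> r * l0 <= INR k).
  assert (HK3p : 0 <= INR K3) by apply pos_INR.
  assert (Hbd : bound E).
  { exists (2 * INR K3). intros r [l0 [Hl0 Hr]].
    destruct (count_exists a hlf 0 (0 + l0)) as [k Hk].
    pose proof (Hr _ _ Hk). pose proof (Hlin 0 l0 k ltac:(lra) Hk).
    assert (INR K3 * (l0 - 1) >= 0) by (apply Rle_ge, Rmult_le_pos; lra).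
    assert (r * l0 <= 2 * INR K3 * l0) by lra.
    destruct (Rle_dec r (2 * INR K3)) as [|Hn]; auto. exfalso.
    assert ((r - 2 * INR K3) * l0 > 0) by (apply Rmult_lt_0_compat; lra). lra. }
  assert (HE0 : E (/ (L + 2))).
  { exists (L+2). split; [lra|]. intros x k Hk. apply Hpos in Hk.
    apply le_INR in Hk. simpl in Hk. rewrite Rinv_l by lra. lra. }
  destruct (completeness E Hbd (ex_intro _ _ HE0)) as [d [Hub Hlub]].
  assert (Hd0 : / (L + 2) <= d) by (apply Hub; exact HE0).
  assert (Hdp : 0 < d) by (pose proof (Rinv_0_lt_compat (L+2) ltac:(lra)); lra).
  exists d. split; [exact Hdp|].
  intros eta Heta.
  set (eps := Rmin (eta/2) (d/2)).
  assert (Heps1 : eps <= eta/2) by apply Rmin_l.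
  assert (Heps2 : eps <= d/2) by apply Rmin_r.
  assert (Heps0 : 0 < eps) by (apply Rmin_pos; lra).
  destruct (classic (exists r, E r /\ d - eps < r)) as [[r [[l0 [Hl0 Hr]] Hrd]] | Hno].
  2:{ exfalso. assert (d <= d - eps); [|lra]. apply Hlub. intros r Er.
      destruct (Rle_dec r (d - eps)); auto. exfalso. apply Hno. exists r. split; auto; lra. }
  assert (Hrp : 0 < r) by lra.
  pose proof (block_bound a hlf r l0 ltac:(lra) ltac:(lra) Hr) as Hblk.
  set (C := INR (K1 + K3)).
  assert (HC0 : 0 <= C) by apply pos_INR.
  exists (1 + C / eta + 2 * r * l0 / eta).
  intros x l HN k Hk.
  assert (Hc1 : 0 <= C / eta) by (unfold Rdiv; apply Rmult_le_pos; [lra | left; apply Rinv_0_lt_compat; lra]).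
  assert (Hc2 : 0 <= 2 * r * l0 / eta) by (unfold Rdiv; apply Rmult_le_pos; [nra | left; apply Rinv_0_lt_compat; lra]).
  assert (Hl1 : 1 < l) by lra.
  assert (HCl : C < eta * l).
  { assert (C / eta < l) by lra.
    replace C with (eta * (C / eta)) by (field; lra). nra. }
  assert (Hrl : 2 * r * l0 < eta * l).
  { assert (2 * r * l0 / eta < l) by lra.
    replace (2 * r * l0) with (eta * (2 * r * l0 / eta)) by (field; lra). nra. }
  assert (Hup : (INR k - C) / l <= d).
  { apply Hub. exists l. split; [lra|]. intros y k' Hk'.
    pose proof (HC x y l k k' ltac:(lra) Hk Hk') as H.
    apply le_INR in H. rewrite !plus_INR in H. unfold C. rewrite plus_INR.
    unfold Rdiv. rewrite Rmult_assoc, Rinv_l by lra. lra. }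
  assert (Hup' : INR k - C <= d * l).
  { replace (INR k - C) with ((INR k - C) / l * l) by (field; lra). nra. }
  pose proof (Hblk x l k ltac:(lra) Hk) as Hlow.
  replace (INR k / l - d) with ((INR k - d * l) / l) by (field; lra).
  unfold Rdiv. rewrite Rabs_mult, Rabs_inv, (Rabs_right l) by lra.
  apply Rmult_lt_reg_r with l; [lra|]. rewrite Rmult_assoc, Rinv_l by lra.
  rewrite Rmult_1_r. apply Rabs_def1; nra.
Qed.
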